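(* Let $M\in SL_2(\mathbb{Z})$ be hyperbolic and let $\epsilon>0$. Then there exists $c_M>0$ such that for every $\kappa$ with $0\le\kappa<c_M$ there exist constants $c_1>c_2>0$ such that for all $n_1,n_2\in\mathbb{Z}^2$ there exists $y_{n_1,n_2}\in\mathbb{R}^2$ with $\|y_{n_1,n_2}\|<\epsilon$ such that for every map $R:\mathbb{R}^2\to\mathbb{R}_{\ge0}$ satisfying $R(z)\le\kappa\|z\|$ for all $z$ with $\|z\|<\epsilon$, one has $$-c_1\big(|n_1|_M-|n_2|_M\big)-\big(n_2^TM-n_1^T\big)y_{n_1,n_2}+\|n_2\|\,R(y_{n_1,n_2})\le -c_2\big(\|n_1\|+\|n_2\|\big).$$
   Context: For $z=(z_1,z_2)\in\mathbb{R}^2$, $\|z\|=|z_1|+|z_2|$; $n^T$ denotes the transpose (row vector). A matrix $M\in SL_2(\mathbb{Z})$ is hyperbolic if none of its eigenvalues has modulus $1$; let $E^+,E^-$ be the eigenlines of the transpose $M^T$ for the eigenvalues of modulus $\lambda_M>1$ and $\lambda_M^{-1}$. Every $y\in\mathbb{R}^2$ decomposes uniquely as $y=y^+_M+y^-_M$ with $y^\pm_M\in E^\pm$, and $|y|_M:=\|y^+_M\|-\|y^-_M\|$. *)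

(* Defs.v *)
From HB Require Import structures.
From mathcomp Require Import all_boot all_order all_algebra.
From mathcomp Require Import algC.
From mathcomp Require Import reals.
From Stdlib Require ClassicalEpsilon.
Set Implicit Arguments. Unset Strict Implicit. Unset Printing Implicit Defensive.
Import Order.TTheory GRing.Theory Num.Theory.
Local Open Scope ring_scope.

Definition l1 {R : realType} (z : 'cV[R]_2) : R := \sum_(i < 2) `|z i 0|.

Definition toR {R : realType} {m n : nat} (A : 'M[int]_(m, n)) : 'M[R]_(m, n) :=
  map_mx (fun x : int => x%:~R) A.

Definition hyperbolic (M : 'M[int]_2) : Prop :=
  forall z : algC, eigenvalue (map_mx (fun x : int => x%:~R) M) z -> `|z| != 1.

Definition is_eigval {R : realType} (A : 'M[R]_2) (mu : R) : Prop :=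
  exists v : 'cV[R]_2, v != 0 /\ A *m v = mu *: v.

Definition Mdecomp {R : realType} (M : 'M[int]_2) (y yp ym : 'cV[R]_2) : Prop :=
  let Mt := (toR M)^T in
  exists mu nu : R,
    [/\ is_eigval Mt mu, is_eigval Mt nu, 1 < `|mu| & `|nu| = `|mu|^-1] /\
    [/\ Mt *m yp = mu *: yp, Mt *m ym = nu *: ym & y = yp + ym].

(* the (unique) decomposition, chosen *)
Definition Msplit {R : realType} (M : 'M[int]_2) (y : 'cV[R]_2) : 'cV[R]_2 * 'cV[R]_2 :=
  ClassicalEpsilon.epsilon (inhabits (0, 0))
    (fun p : 'cV[R]_2 * 'cV[R]_2 => Mdecomp M y p.1 p.2).

Definition normM {R : realType} (M : 'M[int]_2) (y : 'cV[R]_2) : R :=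
  l1 (Msplit M y).1 - l1 (Msplit M y).2.

(* Main.v *)
From mathcomp Require Import all_boot all_order all_algebra algC reals.
From mathcomp Require Import ring lra zify.
From Stdlib Require Import ClassicalEpsilon.
Require Import Defs.
Import Order.TTheory GRing.Theory Num.Theory.
Local Open Scope ring_scope.
Set Implicit Arguments. Unset Strict Implicit. Unset Printing Implicit Defensive.
Lemma sum2 (V : nmodType) (F : 'I_2 -> V) : \sum_(i < 2) F i = F 0 + F 1.
Proof. by rewrite big_ord_recl big_ord1; congr (F _ + F _); apply/val_inj. Qed.
Lemma det2 (R : comPzRingType) (A : 'M[R]_2) : \det A = A 0 0 * A 1 1 - A 0 1 * A 1 0.
Proof.
rewrite (expand_det_row _ 0) sum2 /cofactor !det_mx11 !mxE /=.
have -> : lift (0:'I_2) (0 : 'I_1) = 1 by apply/val_inj.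
have -> : lift (1:'I_2) (0 : 'I_1) = 0 by apply/val_inj.
by rewrite expr0 expr1 mul1r mulN1r mulrN.
Qed.

Lemma ord2_cases (i : 'I_2) : i = 0 \/ i = 1.
Proof. by case: i => [[|[|]]] // Hi; [left|right]; apply/val_inj. Qed.

Lemma CH (R : realType) (M : 'M[int]_2) (y : 'cV[R]_2) : \det M = 1 ->
  (toR M)^T *m ((toR M)^T *m y) = (M 0 0 + M 1 1)%:~R *: ((toR M)^T *m y) - y.
Proof.
rewrite det2 => dM.
have hd : (M 0 0)%:~R * (M 1 1)%:~R - (M 0 1)%:~R * (M 1 0)%:~R = 1 :> R.
  by rewrite -!intrM -intrB dM.
apply/colP => i; rewrite !mxE !sum2 !mxE !sum2 !mxE intrD.
apply/eqP; rewrite -subr_eq0; apply/eqP.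
case: (ord2_cases i) => ->;
  [transitivity ((1 - ((M 0 0)%:~R * (M 1 1)%:~R - (M 0 1)%:~R * (M 1 0)%:~R)) * y 0 0)
  |transitivity ((1 - ((M 0 0)%:~R * (M 1 1)%:~R - (M 0 1)%:~R * (M 1 0)%:~R)) * y 1 0)];
  by [ring | rewrite hd subrr mul0r].
Qed.

Lemma hyp_trace (M : 'M[int]_2) : \det M = 1 -> hyperbolic M -> 2 < `|M 0 0 + M 1 1|.
Proof.
move=> dM hM; rewrite ltNge; apply/negP => ht.
set tt := M 0 0 + M 1 1 in ht.
have ht2 : tt ^+ 2 <= 4.
  rewrite -real_normK ?num_real //; have := normr_ge0 tt; move: ht; set a := `|tt|; move=> *; nia.
set B := map_mx (fun x : int => x%:~R : algC) M.
set t : algC := tt%:~R.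
have t2 : t ^+ 2 <= 4 by rewrite -rmorphXn /= -[4]/(4%:~R) ler_int.
set r := sqrtC (4 - t ^+ 2).
have r2 : r ^+ 2 = 4 - t ^+ 2 by rewrite sqrtCK.
have rR : r \is Num.real by apply: sqrtC_real; rewrite subr_ge0.
have tR : t \is Num.real by apply: realz.
set z := (t + 'i * r) / 2.
have := hM z; rewrite eigenvalue_root_char.
set p := char_poly B.
have sp : size p = 3%N by rewrite size_char_poly.
have p2 : p`_2 = 1 by have /monicP := char_poly_monic B; rewrite -/p /lead_coef sp.
have p1 : p`_1 = - t.
  rewrite (char_poly_trace (n:=2) B) // /mxtrace sum2 !mxE /t rmorphD; reflexivity.
have p0 : p`_0 = 1.
  rewrite char_poly_det det2 !mxE -!intrM -intrB -det2 dM; by rewrite expr2 mulrNN !mul1r.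
have rootz : root p z.
  rewrite /root horner_coef sp !big_ord_recl big_ord0 /= p0 p1 p2 /z.
  apply/eqP.
  have : 'i ^+ 2 = -1 :> algC by rewrite sqrCi.
  move: r2; clear; move=> r2 hi.
  rewrite /bump /=.
  have hu : ('i * r) ^+ 2 = t ^+ 2 - 4 by rewrite exprMn hi r2; ring.
  move: hu; set u := 'i * r => hu.
  have -> : 1 * ((t + u) / 2) ^+ 0 + (- t * ((t + u) / 2) ^+ 1 + (1 * ((t + u) / 2) ^+ 2 + 0))
     = (u ^+ 2 - (t ^+ 2 - 4)) / 4 :> algC.
    by field.
  by rewrite hu subrr mul0r.
have n2 : `|t + 'i * r| = 2.
  apply/eqP; rewrite -(eqrXn2 (n:=2)) // ?normr_ge0 // normC2_rect // r2.
  by apply/eqP; ring.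
move=> /(_ rootz); rewrite /z normrM n2 normfV ger0_norm // mulfV ?eqxx //. have h2 : (2 : algC) != 0 by rewrite pnatr_eq0. exact: h2.
Qed.
Lemma eig_only (R : realType) (A : 'M[R]_2) (mu nu m : R) (v : 'cV[R]_2) :
  (forall y : 'cV[R]_2, A *m (A *m y) = (mu + nu) *: (A *m y) - y) -> mu * nu = 1 ->
  v != 0 -> A *m v = m *: v -> m = mu \/ m = nu.
Proof.
move=> hCH hmn v0 hv.
have := hCH v; rewrite hv -scalemxAr hv !scalerA => /eqP.
rewrite -subr_eq0 -[X in _ - (_ - X)](scale1r (R:=R)) -!scalerBl scaler_eq0 (negPf v0) orbF.
have -> : m * m - ((mu + nu) * m - 1) = (m - mu) * (m - nu) by rewrite -hmn; ring.
by rewrite mulf_eq0 !subr_eq0 => /orP [/eqP|/eqP]; [left|right].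
Qed.

Definition Pm {R : realType} (A : 'M[R]_2) (mu nu : R) (y : 'cV[R]_2) :=
  (mu - nu)^-1 *: (A *m y - nu *: y).
Definition Qm {R : realType} (A : 'M[R]_2) (mu nu : R) (y : 'cV[R]_2) :=
  (mu - nu)^-1 *: (mu *: y - A *m y).

Lemma PQ_sum (R : realType) (A : 'M[R]_2) (mu nu : R) y : mu != nu ->
  Pm A mu nu y + Qm A mu nu y = y.
Proof.
move=> hne; rewrite /Pm /Qm -scalerDr.
have -> : A *m y - nu *: y + (mu *: y - A *m y) = (mu - nu) *: y.
  by rewrite scalerBl addrC (addrA (mu *: y - A *m y)) subrK.
rewrite scalerA mulVf ?scale1r //.
by rewrite subr_eq0.
Qed.

Lemma P_eig (R : realType) (A : 'M[R]_2) (mu nu : R) y :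
  (forall y : 'cV[R]_2, A *m (A *m y) = (mu + nu) *: (A *m y) - y) -> mu * nu = 1 ->
  A *m Pm A mu nu y = mu *: Pm A mu nu y.
Proof.
move=> hCH hmn; rewrite /Pm -scalemxAr scalerA mulrC -scalerA; congr (_ *: _).
rewrite mulmxBr -scalemxAr hCH scalerBr scalerA hmn scale1r scalerDl.
by rewrite (addrAC (mu *: (A *m y))) addrK.
Qed.

Lemma Q_eig (R : realType) (A : 'M[R]_2) (mu nu : R) y :
  (forall y : 'cV[R]_2, A *m (A *m y) = (mu + nu) *: (A *m y) - y) -> mu * nu = 1 ->
  A *m Qm A mu nu y = nu *: Qm A mu nu y.
Proof.
move=> hCH hmn; rewrite /Qm -scalemxAr scalerA mulrC -scalerA; congr (_ *: _).
rewrite mulmxBr -scalemxAr hCH scalerBr scalerA mulrC hmn scale1r scalerDl.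
by rewrite -(addrA (mu *: (A *m y))) opprD (addrA (mu *: (A *m y))) subrr add0r opprB.
Qed.
Lemma Pm0 (R : realType) (A : 'M[R]_2) (m n : R) (j : 'I_2) : m != n ->
  Pm A m n (delta_mx j 0) = 0 ->
  A *m delta_mx j 0 = n *: (delta_mx j 0 : 'cV[R]_2).
Proof.
move=> hne /eqP; rewrite /Pm scaler_eq0 invr_eq0 subr_eq0 (negPf hne) /= subr_eq0.
by move/eqP.
Qed.

Lemma eig_ex (R : realType) (A : 'M[R]_2) (m n : R) :
  (forall y : 'cV[R]_2, A *m (A *m y) = (m + n) *: (A *m y) - y) -> m * n = 1 ->
  A 0 0 * A 1 1 - A 0 1 * A 1 0 = 1 -> n ^+ 2 != 1 -> m != n -> is_eigval A m.
Proof.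
move=> hCH hmn hdet hn hne.
case: (boolP (Pm A m n (delta_mx 0 0) == 0)) => [/eqP h0|h0]; last first.
  by exists (Pm A m n (delta_mx 0 0)); split => //; apply: P_eig.
case: (boolP (Pm A m n (delta_mx 1 0) == 0)) => [/eqP h1|h1]; last first.
  by exists (Pm A m n (delta_mx 1 0)); split => //; apply: P_eig.
have e0 := @Pm0 _ _ _ _ _ hne h0; have e1 := @Pm0 _ _ _ _ _ hne h1.
have a00 := congr1 (fun X : 'cV[R]_2 => X 0 0) e0.
have a10 := congr1 (fun X : 'cV[R]_2 => X 1 0) e0.
have a01 := congr1 (fun X : 'cV[R]_2 => X 0 0) e1.
have a11 := congr1 (fun X : 'cV[R]_2 => X 1 0) e1.
move: a00 a10 a01 a11; rewrite /= !mxE !sum2 !mxE /= => a00 a10 a01 a11.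
move: hdet hn; rewrite !mulr1 !mulr0 !addr0 !add0r in a00 a10 a01 a11.
by rewrite a00 a10 a01 a11 mulr0 subr0 -expr2 => ->; rewrite eqxx.
Qed.

Lemma uniqPQ (R : realType) (A : 'M[R]_2) (mu nu : R) (yp ym : 'cV[R]_2) :
  A *m yp = mu *: yp -> A *m ym = nu *: ym -> mu != nu ->
  Pm A mu nu (yp + ym) = yp /\ Qm A mu nu (yp + ym) = ym.
Proof.
move=> hp hm hne; have hne' : mu - nu != 0 by rewrite subr_eq0.
split; rewrite /Pm /Qm mulmxDr hp hm.
  have -> : mu *: yp + nu *: ym - nu *: (yp + ym) = (mu - nu) *: yp.
    by rewrite scalerDr opprD addrACA subrr addr0 scalerBl.
  by rewrite scalerA mulVf ?scale1r.
have -> : mu *: (yp + ym) - (mu *: yp + nu *: ym) = (mu - nu) *: ym.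
  by rewrite scalerDr opprD addrACA subrr add0r scalerBl.
by rewrite scalerA mulVf ?scale1r.
Qed.

Lemma msplit_eq (R : realType) (M : 'M[int]_2) (mu nu : R) :
  (forall y : 'cV[R]_2, (toR M)^T *m ((toR M)^T *m y) = (mu + nu) *: ((toR M)^T *m y) - y) ->
  mu * nu = 1 -> 1 < `|mu| ->
  (toR M)^T 0 0 * (toR M)^T 1 1 - (toR M)^T 0 1 * (toR M)^T 1 0 = 1 :> R ->
  forall y, Msplit M y = (Pm (toR M)^T mu nu y, Qm (toR M)^T mu nu y).
Proof.
move=> hCH hmn hmu hdet y.
have mu0 : mu != 0 by apply/eqP => h; rewrite h normr0 in hmu; lra.
have nuE : nu = mu^-1 by apply: (mulfI mu0); rewrite hmn mulfV.
have hnuE : `|nu| = `|mu|^-1 by rewrite nuE normfV.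
have hnu : `|nu| < 1.
  have : `|mu| * `|nu| = 1 by rewrite -normrM hmn normr1.
  have := normr_ge0 nu; nra.
have hne : mu != nu by apply/eqP => e; rewrite e in hmu; lra.
have mu2 : mu ^+ 2 != 1 by rewrite sqr_norm_eq1; apply/eqP => h; lra.
have nu2 : nu ^+ 2 != 1 by rewrite sqr_norm_eq1; apply/eqP => h; lra.
have emu : is_eigval (toR M)^T mu by apply: eig_ex hCH hmn hdet nu2 hne.
have enu : is_eigval (toR M)^T nu.
  apply: eig_ex _ _ hdet mu2 _; first by move=> z; rewrite (addrC nu) hCH.
    by rewrite mulrC.
  by rewrite eq_sym.
have ex : exists p : 'cV[R]_2 * 'cV[R]_2, Mdecomp M y p.1 p.2.
  exists (Pm (toR M)^T mu nu y, Qm (toR M)^T mu nu y); exists mu, nu; split; split => //.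
  - exact: P_eig.
  - exact: Q_eig.
  - by rewrite PQ_sum.
have H : Mdecomp M y (Msplit M y).1 (Msplit M y).2 := epsilon_spec _ _ ex.
move: H; case: (Msplit M y) => yp ym /=.
move=> [mu' [nu' [[[v [v0 hv]] [w [w0 hw]] hmu' hnu'] [hp hm ->]]]].
have [emu'|emu'] := @eig_only _ _ _ _ _ _ hCH hmn v0 hv; last by exfalso; rewrite emu' in hmu'; lra.
subst mu'.
have [enu'|enu'] := @eig_only _ _ _ _ _ _ hCH hmn w0 hw.
  exfalso; rewrite enu' in hnu'.
  have : `|mu| * `|mu|^-1 = 1 by rewrite mulfV // normr_eq0.
  rewrite -hnu'; nra.
subst nu'.
by have [-> ->] := @uniqPQ _ _ _ _ _ _ hp hm hne.
Qed.

Lemma roots (R : realType) (t : R) : 2 < `|t| ->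
  exists mu nu : R, [/\ mu + nu = t, mu * nu = 1 & 1 < `|mu|].
Proof.
move=> ht.
have ht2 : 4 <= t ^+ 2 by rewrite -real_normK ?num_real //; nra.
set r := Num.sqrt (t ^+ 2 - 4).
have r2 : r ^+ 2 = t ^+ 2 - 4 by rewrite sqr_sqrtr // subr_ge0.
have r0 : 0 <= r by apply: sqrtr_ge0.
have [t0|t0] := lerP 0 t.
  exists ((t + r) / 2), ((t - r) / 2); split.
  - by field.
  - have -> : (t + r) / 2 * ((t - r) / 2) = (t ^+ 2 - r ^+ 2) / 4 by field.
    by rewrite r2; field.
  - rewrite ger0_norm // in ht; rewrite ger0_norm; lra.
exists ((t - r) / 2), ((t + r) / 2); split.
- by field.
- have -> : (t - r) / 2 * ((t + r) / 2) = (t ^+ 2 - r ^+ 2) / 4 by field.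
  by rewrite r2; field.
- rewrite ltr0_norm // in ht; rewrite ltr0_norm; lra.
Qed.

Lemma l1E (R : realType) (z : 'cV[R]_2) : l1 z = `|z 0 0| + `|z 1 0|.
Proof. by rewrite /l1 sum2. Qed.

Lemma l1_ge0 (R : realType) (z : 'cV[R]_2) : 0 <= l1 z.
Proof. by rewrite l1E addr_ge0. Qed.

Lemma l1D (R : realType) (x y : 'cV[R]_2) : l1 (x + y) <= l1 x + l1 y.
Proof.
rewrite !l1E !mxE; have := ler_normD (x 0 0) (y 0 0); have := ler_normD (x 1 0) (y 1 0); lra.
Qed.

Lemma l1B (R : realType) (x y : 'cV[R]_2) : l1 (x - y) <= l1 x + l1 y.
Proof.
rewrite !l1E !mxE; have := ler_normB (x 0 0) (y 0 0); have := ler_normB (x 1 0) (y 1 0); lra.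
Qed.

Lemma l1Z (R : realType) (k : R) (x : 'cV[R]_2) : l1 (k *: x) = `|k| * l1 x.
Proof. by rewrite !l1E !mxE !normrM mulrDr. Qed.

Lemma l1_mul (R : realType) (B : 'M[R]_2) (v : 'cV[R]_2) :
  l1 (B *m v) <= (`|B 0 0| + `|B 0 1| + `|B 1 0| + `|B 1 1|) * l1 v.
Proof.
rewrite !l1E !mxE !sum2.
have := ler_normD (B 0 0 * v 0 0) (B 0 1 * v 1 0).
have := ler_normD (B 1 0 * v 0 0) (B 1 1 * v 1 0).
rewrite !normrM.
have := normr_ge0 (B 0 0); have := normr_ge0 (B 0 1).
have := normr_ge0 (B 1 0); have := normr_ge0 (B 1 1).
have := normr_ge0 (v 0 0); have := normr_ge0 (v 1 0).
nra.
Qed.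

Lemma Pm_lin (R : realType) (A : 'M[R]_2) (mu nu : R) (u w : 'cV[R]_2) :
  Pm A mu nu (u - w) = Pm A mu nu u - Pm A mu nu w.
Proof.
rewrite /Pm -scalerBr; congr (_ *: _).
rewrite mulmxBr scalerBr.
by rewrite !opprD !opprK (addrACA (A *m u)).
Qed.

Lemma Qm_lin (R : realType) (A : 'M[R]_2) (mu nu : R) (u w : 'cV[R]_2) :
  Qm A mu nu (u - w) = Qm A mu nu u - Qm A mu nu w.
Proof.
rewrite /Qm -scalerBr; congr (_ *: _).
rewrite mulmxBr scalerBr.
by rewrite !opprD !opprK (addrACA (mu *: u)).
Qed.

Lemma Pm_comm (R : realType) (A : 'M[R]_2) (mu nu : R) (x : 'cV[R]_2) :
  Pm A mu nu (A *m x) = A *m Pm A mu nu x.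
Proof. by rewrite /Pm -scalemxAr mulmxBr -scalemxAr. Qed.

Lemma Qm_comm (R : realType) (A : 'M[R]_2) (mu nu : R) (x : 'cV[R]_2) :
  Qm A mu nu (A *m x) = A *m Qm A mu nu x.
Proof. by rewrite /Qm -scalemxAr mulmxBr -scalemxAr. Qed.

Lemma Pm_bound (R : realType) (A : 'M[R]_2) (mu nu : R) (v : 'cV[R]_2) :
  l1 (Pm A mu nu v) <= `|mu - nu|^-1 *
     ((`|A 0 0| + `|A 0 1| + `|A 1 0| + `|A 1 1|) + `|mu| + `|nu|) * l1 v.
Proof.
rewrite /Pm l1Z normfV -mulrA ler_wpM2l ?invr_ge0 ?normr_ge0 //.
apply: le_trans (l1B _ _) _; rewrite l1Z.
have := l1_mul A v; have := l1_ge0 v; have := normr_ge0 mu; nra.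
Qed.

Lemma Qm_bound (R : realType) (A : 'M[R]_2) (mu nu : R) (v : 'cV[R]_2) :
  l1 (Qm A mu nu v) <= `|mu - nu|^-1 *
     ((`|A 0 0| + `|A 0 1| + `|A 1 0| + `|A 1 1|) + `|mu| + `|nu|) * l1 v.
Proof.
rewrite /Qm l1Z normfV -mulrA ler_wpM2l ?invr_ge0 ?normr_ge0 //.
apply: le_trans (l1B _ _) _; rewrite l1Z.
have := l1_mul A v; have := l1_ge0 v; have := normr_ge0 nu; nra.
Qed.

Lemma expand_step (R : realType) (A : 'M[R]_2) (mu nu : R) (x : 'cV[R]_2) :
  (forall y : 'cV[R]_2, A *m (A *m y) = (mu + nu) *: (A *m y) - y) ->
  mu * nu = 1 -> 1 < `|mu| ->
  l1 (Pm A mu nu x) - l1 (Qm A mu nu x) + (1 - `|nu|) * l1 x <=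
  l1 (Pm A mu nu (A *m x)) - l1 (Qm A mu nu (A *m x)).
Proof.
move=> hCH hmn hmu.
have hne : mu != nu.
  apply/eqP => e; rewrite -e in hmn.
  have : `|mu| * `|mu| = 1 by rewrite -normrM hmn normr1.
  nra.
rewrite Pm_comm Qm_comm P_eig // Q_eig // (l1Z mu (Pm A mu nu x)) (l1Z nu (Qm A mu nu x)).
have hx := l1D (Pm A mu nu x) (Qm A mu nu x); rewrite PQ_sum // in hx.
have : `|mu| * `|nu| = 1 by rewrite -normrM hmn normr1.
have := l1_ge0 (Pm A mu nu x); have := l1_ge0 (Qm A mu nu x).
have := normr_ge0 nu; have := normr_ge0 mu.
move=> h1 h2 h3 h4 h5.
have hb : `|nu| < 1 by nra.
have hab : 0 <= `|mu| + `|nu| - 2 by nra.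
have k1 : (1 - `|nu|) * l1 x <= (1 - `|nu|) * (l1 (Pm A mu nu x) + l1 (Qm A mu nu x)).
  by rewrite ler_wpM2l // subr_ge0 ltW.
have k2 := mulr_ge0 hab h4.
lra.
Qed.

Theorem lemma3p3 (R : realType) (M : 'M[int]_2) (eps : R) :
  \det M = 1 -> hyperbolic M -> 0 < eps ->
  exists cM : R, 0 < cM /\
    forall kappa : R, 0 <= kappa -> kappa < cM ->
    exists c1 c2 : R, [/\ 0 < c2, c2 < c1 &
      forall n1 n2 : 'cV[int]_2,
      exists y : 'cV[R]_2, l1 y < eps /\
        forall Rf : 'cV[R]_2 -> R,
          (forall z, 0 <= Rf z) ->
          (forall z, l1 z < eps -> Rf z <= kappa * l1 z) ->
          - c1 * (normM M (toR n1) - normM M (toR n2))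
            - (((toR n2)^T *m toR M - (toR n1)^T) *m y) 0 0
            + l1 (toR n2) * Rf y
          <= - c2 * (l1 (toR n1) + l1 (toR n2))].
Proof.
move=> dM hM heps.
have ht := hyp_trace dM hM.
have ht' : 2 < `|(M 0 0 + M 1 1)%:~R : R| by rewrite -intr_norm (ltr_int R 2).
have [mu [nu [hsum hmn hmu]]] := roots ht'.
clear ht ht'.
pose A : 'M[R]_2 := (toR M)^T.
have hCH : forall y : 'cV[R]_2, A *m (A *m y) = (mu + nu) *: (A *m y) - y.
  by move=> y; rewrite hsum; apply: CH.
have hdetA : A 0 0 * A 1 1 - A 0 1 * A 1 0 = 1.
  rewrite /A /toR !mxE -!intrM -intrB.
  by rewrite (mulrC (M 1 0)) -det2 dM.
have hsplit := msplit_eq hCH hmn hmu hdetA.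
clear dM hM.
have hN : forall y, normM M y = l1 (Pm A mu nu y) - l1 (Qm A mu nu y).
  by move=> y; rewrite /normM hsplit.
have hmn' : `|mu| * `|nu| = 1 by rewrite -normrM hmn normr1.
have mu0 : mu != 0 by apply/eqP => h; rewrite h normr0 in hmu; lra.
have nuE : nu = mu^-1 by apply: (mulfI mu0); rewrite hmn mulfV.
have hnu : `|nu| < 1 by rewrite nuE normfV invf_lt1 //; lra.
have hne : mu != nu.
  apply/eqP => e; rewrite -e in hnu; lra.
set S := `|A 0 0| + `|A 0 1| + `|A 1 0| + `|A 1 1|.
have S0 : 0 <= S by rewrite /S !addr_ge0.
set K := `|mu - nu|^-1 * (S + `|mu| + `|nu|).
have K0 : 0 < K.
  rewrite /K mulr_gt0 // ?invr_gt0 ?normr_gt0 ?subr_eq0 //.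
  have := normr_ge0 nu; lra.
set C := 2 * K.
have C0 : 0 < C by rewrite /C; lra.
have hLip : forall u w : 'cV[R]_2, normM M u - C * l1 w <= normM M (u - w).
  move=> u w; rewrite !hN Pm_lin Qm_lin.
  have := l1D (Pm A mu nu u - Pm A mu nu w) (Pm A mu nu w); rewrite subrK.
  have := l1D (Qm A mu nu u) (- Qm A mu nu w).
  have -> : l1 (- Qm A mu nu w) = l1 (Qm A mu nu w) by rewrite -scaleN1r l1Z normrN normr1 mul1r.
  have := Pm_bound A mu nu w; have := Qm_bound A mu nu w.
  rewrite -/S -/K /C; lra.
have hExp : forall x : 'cV[R]_2, normM M x + (1 - `|nu|) * l1 x <= normM M (A *m x).
  by move=> x; rewrite !hN; apply: expand_step.
set alpha := 1 - `|nu|.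
have al0 : 0 < alpha by rewrite /alpha; lra.
have al1 : alpha <= 1 by rewrite /alpha; have := normr_ge0 nu; lra.
exists (alpha / (4 * C)); split; first by rewrite divr_gt0 // mulr_gt0.
move=> kappa hk0 hk.
set t0 := eps / 2.
have t00 : 0 < t0 by rewrite /t0; lra.
set c1 := t0 / (4 * C).
have c10 : 0 < c1 by rewrite divr_gt0 // mulr_gt0.
have c1C : c1 * C = t0 / 4 by rewrite /c1; field; lra.
set gamma := c1 * alpha - kappa * t0.
have ga0 : 0 < gamma.
  have : kappa * t0 < alpha / (4 * C) * t0 by rewrite ltr_pM2r.
  have -> : alpha / (4 * C) * t0 = c1 * alpha by rewrite /c1; field; lra.
  rewrite /gamma; lra.
set c2 := Num.min (gamma / (S + 1)) (t0 / 4) / 2.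
have hm1 : Num.min (gamma / (S + 1)) (t0 / 4) <= gamma / (S + 1) by rewrite ge_min lexx.
have hm2 : Num.min (gamma / (S + 1)) (t0 / 4) <= t0 / 4 by rewrite ge_min lexx orbT.
have hm0 : 0 < Num.min (gamma / (S + 1)) (t0 / 4).
  rewrite lt_min; apply/andP; split; apply: divr_gt0; lra.
have gS : gamma / (S + 1) <= gamma.
  by rewrite ler_pdivrMr; [nra|lra].
exists c1, c2; split.
- by rewrite /c2; lra.
- rewrite /c2. have : gamma <= c1 by rewrite /gamma; nra. lra.
move=> n1 n2.
set x1 : 'cV[R]_2 := toR n1; set x2 : 'cV[R]_2 := toR n2.
set w := A *m x2 - x1.
exists (\col_i (t0 / 2 * Num.sg (w i 0))).
set y := \col_i (t0 / 2 * Num.sg (w i 0)).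
have yE : forall i, y i 0 = t0 / 2 * Num.sg (w i 0) by move=> i; rewrite mxE.
have s1 : forall x : R, `|Num.sg x| <= 1.
  by move=> x; rewrite normr_sg; case: (x != 0).
have ly : l1 y <= t0.
  rewrite l1E !yE !(normrM (t0 / 2)) (ger0_norm (_ : 0 <= t0 / 2)); last by lra.
  have := s1 (w 0 0); have := s1 (w 1 0); have := normr_ge0 (Num.sg (w 0 0));
  have := normr_ge0 (Num.sg (w 1 0)); nra.
have hp : ((x2^T *m toR M - x1^T) *m y) 0 0 = t0 / 2 * l1 w.
  have -> : x2^T *m toR M - x1^T = w^T by rewrite /w linearB /= trmx_mul trmxK.
  rewrite mxE sum2 ![w^T _ _]mxE !yE l1E !normrEsg; ring.
have hx1 : x1 = A *m x2 - w by rewrite /w opprB (addrCA (A *m x2)) subrr addr0.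
have F1 := hLip (A *m x2) w; rewrite -hx1 in F1.
have F2 := hExp x2.
have F5 : l1 x1 <= S * l1 x2 + l1 w.
  by rewrite hx1; apply: le_trans (l1B _ _) _; rewrite lerD2r; apply: l1_mul.
have ly' : l1 y < eps by move: ly; rewrite /t0; lra.
split; first by [].
move=> Rf _ hR.
have hRy : Rf y <= kappa * t0.
  apply: le_trans (hR y ly') _.
  by rewrite ler_wpM2l.
rewrite hp.
have X2 := l1_ge0 x2; have L0 := l1_ge0 w.
have h1 : c1 * (alpha * l1 x2 - C * l1 w) <= c1 * (normM M x1 - normM M x2).
  by rewrite ler_wpM2l ?(ltW c10) //; rewrite /alpha; lra.
have h2 : l1 x2 * Rf y <= l1 x2 * (kappa * t0) by rewrite ler_wpM2l.
have c20 : 0 <= c2 by rewrite /c2; lra.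
have h3 : c2 * (l1 x1 + l1 x2) <= c2 * ((S + 1) * l1 x2 + l1 w).
  by rewrite ler_wpM2l //; lra.
have h4 : c2 * (S + 1) <= gamma.
  have : Num.min (gamma / (S + 1)) (t0 / 4) * (S + 1) <= gamma.
    by rewrite -ler_pdivlMr; [exact: hm1 | lra].
  rewrite /c2; lra.
have h5 : c2 <= t0 / 4 by rewrite /c2; lra.
have h4' : c2 * (S + 1) * l1 x2 <= gamma * l1 x2 by rewrite ler_wpM2r.
have h5' : c2 * l1 w <= t0 / 4 * l1 w by rewrite ler_wpM2r.
have h6 : c1 * C * l1 w = t0 / 4 * l1 w by rewrite c1C.
have h7 : gamma * l1 x2 = c1 * alpha * l1 x2 - kappa * t0 * l1 x2 by rewrite /gamma; ring.
move: h1 h2 h3 h4' h5' h6 h7; rewrite /t0; nra.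
Qed.
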